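(* Let $q\neq-1$ be real and $n\ge0$. Then $$U_n(x,s,q)=\sum_{k=0}^{\lfloor n/2\rfloor}q^{k^2}\begin{bmatrix} n-k\\ k\end{bmatrix}(1+q^{k+1})\cdots(1+q^{n-k})\,s^kx^{n-2k}.$$
   Context: $U_n(x,s,q)$ is defined by $U_{-1}=0$, $U_0=1$, $U_n(x,s,q)=(1+q^{n})x\,U_{n-1}(x,s,q)+q^{n-1}s\,U_{n-2}(x,s,q)$ for $n\ge1$. Notation: $[m]=1+q+\cdots+q^{m-1}$, $[m]!=[1]\cdots[m]$, $\begin{bmatrix} m\\ j\end{bmatrix}=\frac{[m]!}{[j]![m-j]!}$. Empty products equal $1$. *)

(* Defs.v *)
From mathcomp Require Import all_boot all_order all_algebra.
Set Implicit Arguments. Unset Strict Implicit. Unset Printing Implicit Defensive.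
Import Order.TTheory GRing.Theory Num.Theory.
Local Open Scope ring_scope.

Definition qint (R : nzRingType) (q : R) (m : nat) : R := \sum_(i < m) q ^+ i.

Definition qfact (R : nzRingType) (q : R) (m : nat) : R :=
  \prod_(i < m) qint q i.+1.

Definition qbinom (R : fieldType) (q : R) (m j : nat) : R :=
  qfact q m / (qfact q j * qfact q (m - j)).

(* U_n(x,s,q): U_{-1} = 0, U_0 = 1,
   U_n = (1+q^n) x U_{n-1} + q^(n-1) s U_{n-2}  (n >= 1).
   Here U_1 = (1+q) x (since U_{-1} = 0), and for n >= 0,
   U_{n+2} = (1+q^(n+2)) x U_{n+1} + q^(n+1) s U_n. *)
Fixpoint Upoly (R : nzRingType) (x s q : R) (n : nat) : R :=
  match n with
  | 0 => 1
  | 1 => (1 + q) * x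
  | (m.+1 as n').+1 => (1 + q ^+ n'.+1) * x * Upoly x s q n' + q ^+ n' * s * Upoly x s q m
  end.

(* Main.v *)
Require Import Defs.
From mathcomp Require Import all_boot all_order all_algebra.
From mathcomp Require Import ring lra zify.
Import Order.TTheory GRing.Theory Num.Theory.
Local Open Scope ring_scope.

Section Aux.
Variable R : realFieldType.
Variable q : R.
Hypothesis hq : q != -1.

Lemma qintS m : qint q m.+1 = qint q m + q ^+ m.
Proof. by rewrite /qint big_ord_recr. Qed.

Lemma qint0 : qint q 0%N = 0.
Proof. by rewrite /qint big_ord0. Qed.

Lemma qint_add a b : qint q (a + b) = qint q a + q ^+ a * qint q b.
Proof.
elim: b => [|b IH]; first by rewrite addn0 qint0 mulr0 addr0.
by rewrite addnS !qintS IH exprD; ring.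
Qed.

Lemma qint_mul m : (1 - q) * qint q m = 1 - q ^+ m.
Proof.
elim: m => [|m IH]; first by rewrite qint0 expr0 mulr0 subrr.
by rewrite qintS mulrDr IH exprS; ring.
Qed.

Lemma qint1 m : q = 1 -> qint q m = m%:R.
Proof.
move=> ->; elim: m => [|m IH]; first by rewrite /qint big_ord0.
by rewrite /qint big_ord_recr /= -/(qint 1 m) IH expr1n -natr1.
Qed.

Lemma qint_neq0 m : (0 < m)%N -> qint q m != 0.
Proof.
move=> m0.
have [q1|q1] := eqVneq q 1.
  by rewrite qint1 // pnatr_eq0 -lt0n.
apply/negP => /eqP h.
have := qint_mul m; rewrite h mulr0 => /eqP; rewrite eq_sym subr_eq0 => /eqP hm.
have : `|q| ^+ m == 1 by rewrite -normrX -hm normr1.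
rewrite pexpr_eq1 // => /eqP.
have [q0|q0] := lerP 0 q.
  by rewrite ger0_norm // => qe; move: q1; rewrite qe eqxx.
by rewrite ltr0_norm // => /eqP; rewrite eqr_oppLR => /eqP qe; move: hq; rewrite qe eqxx.
Qed.

Lemma qfactS m : qfact q m.+1 = qfact q m * qint q m.+1.
Proof. by rewrite /qfact big_ord_recr. Qed.

Lemma qfact0 : qfact q 0%N = 1.
Proof. by rewrite /qfact big_ord0. Qed.

Lemma qfact_neq0 m : qfact q m != 0.
Proof.
elim: m => [|m IH]; first by rewrite qfact0 oner_eq0.
by rewrite qfactS mulf_neq0 // qint_neq0.
Qed.

Lemma qbinom0 m : qbinom q m 0%N = 1.
Proof. by rewrite /qbinom subn0 qfact0 mul1r divff // qfact_neq0. Qed.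

Lemma qbinomm m : qbinom q m m = 1.
Proof. by rewrite /qbinom subnn qfact0 mulr1 divff // qfact_neq0. Qed.

Lemma pascal j r : qbinom q (j+r).+2 j.+1 = qbinom q (j+r).+1 j.+1 + q ^+ r.+1 * qbinom q (j+r).+1 j
  /\ qbinom q (j+r).+2 j.+1 = q ^+ j.+1 * qbinom q (j+r).+1 j.+1 + qbinom q (j+r).+1 j.
Proof.
rewrite /qbinom.
have -> : ((j + r).+2 - j.+1 = r.+1)%N by lia.
have -> : ((j + r).+1 - j.+1 = r)%N by lia.
have -> : ((j + r).+1 - j = r.+1)%N by lia.
have Fa := qfact_neq0 (j+r).+1.
have Fj := qfact_neq0 j.
have Fr := qfact_neq0 r.
have Ij := @qint_neq0 j.+1 (ltn0Sn j).
have Ir := @qint_neq0 r.+1 (ltn0Sn r).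
rewrite qfactS (qfactS j) (qfactS r).
split.
  have -> : ((j + r).+2 = r.+1 + j.+1)%N by lia.
  rewrite qint_add; field.
  by rewrite Ij Ir Fj Fr.
have -> : ((j + r).+2 = j.+1 + r.+1)%N by lia.
rewrite qint_add; field.
by rewrite Ij Ir Fj Fr.
Qed.
Variables x s : R.

Definition E (n k : nat) : R := q ^+ (k * k) * qbinom q (n - k) k
     * (\prod_(k.+1 <= i < (n - k).+1) (1 + q ^+ i))
     * s ^+ k * x ^+ (n - 2 * k).
Definition T (n k : nat) : R := if (2 * k <= n)%N then E n k else 0.

Lemma T0 n : T n.+2 0%N = (1 + q ^+ n.+2) * x * T n.+1 0%N.
Proof.
rewrite /T /E /= !subn0 !muln0 !qbinom0 big_nat_recr //= !expr0 (exprS x n.+1); ring.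
Qed.

Lemma TS n j : T n.+2 j.+1 = (1 + q ^+ n.+2) * x * T n.+1 j.+1 + q ^+ n.+1 * s * T n j.
Proof.
rewrite /T.
have [lt|le] := ltnP n (2 * j)%N.
  have -> : (2 * j.+1 <= n.+2)%N = false by lia.
  have -> : (2 * j.+1 <= n.+1)%N = false by lia.
  by rewrite !mulr0 addr0.
have -> : (2 * j.+1 <= n.+2)%N = true by lia.
have [eq|lt] := eqVneq n (2 * j)%N.
  have -> : (2 * j.+1 <= n.+1)%N = false by lia.
  rewrite eq /E.
  have -> : ((2 * j).+2 - j.+1 = j.+1)%N by lia.
  have -> : ((2 * j) - j = j)%N by lia.
  have -> : ((2 * j).+2 - 2 * j.+1 = 0)%N by lia.
  have -> : ((2 * j) - 2 * j = 0)%N by lia.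
  rewrite !qbinomm !big_geq // mulr0 add0r.
  have -> : (j.+1 * j.+1 = j * j + (j + j).+1)%N by nia.
  have -> : (2 * j = j + j)%N by lia.
  rewrite !(exprS, exprD, expr0); ring.
have -> : (2 * j.+1 <= n.+1)%N = true by lia.
have [r ->] : exists r, n = (j + j + r).+1 by exists (n - (j + j)).-1; lia.
rewrite /E.
have -> : ((j + j + r).+3 - j.+1 = (j + r).+2)%N by lia.
have -> : ((j + j + r).+2 - j.+1 = (j + r).+1)%N by lia.
have -> : ((j + j + r).+1 - j = (j + r).+1)%N by lia.
have -> : ((j + j + r).+3 - 2 * j.+1 = r.+1)%N by lia.
have -> : ((j + j + r).+2 - 2 * j.+1 = r)%N by lia.
have -> : ((j + j + r).+1 - 2 * j = r.+1)%N by lia.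
rewrite big_nat_recr /=; last by lia.
rewrite (big_ltn (m := j.+1)); last by lia.
set Q := \prod_(j.+2 <= i < (j + r).+2) _.
have [P1 P2] := pascal j r.
rewrite P1.
set B2 := qbinom q (j + r).+1 j.+1.
set B3 := qbinom q (j + r).+1 j.
have D : (q * q ^+ r - 1) * B3 = (q * q ^+ j - 1) * B2.
  have := P2; rewrite P1 => /eqP; rewrite -subr_eq0 => /eqP h.
  apply/eqP; rewrite -subr_eq0; apply/eqP; rewrite -h !exprS /B2 /B3; ring.
have -> : (j.+1 * j.+1 = j * j + (j + j).+1)%N by nia.
apply/eqP; rewrite -subr_eq0; apply/eqP.
rewrite !(exprS, exprD).
transitivity (q ^+ (j * j) * Q * s * s ^+ j * x * x ^+ r * (q ^+ j * q ^+ j * q ^+ j * q ^+ r * q * q * q)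
   * ((q * q ^+ r - 1) * B3 - (q * q ^+ j - 1) * B2)); first ring.
by rewrite D subrr mulr0.
Qed.

Lemma sumT n N : (n < N)%N -> \sum_(k < N) T n k = \sum_(k < n./2.+1) E n k.
Proof.
move=> hN; rewrite (big_ord_widen N (E n)); last by lia.
rewrite [RHS]big_mkcond /=; apply: eq_bigr => i _; rewrite /T.
by have -> : (i < n./2.+1)%N = (2 * i <= n)%N by apply/idP/idP; lia.
Qed.

Lemma sumT2 n N M : (n < N)%N -> (n < M)%N -> \sum_(k < N) T n k = \sum_(k < M) T n k.
Proof. by move=> h1 h2; rewrite !sumT. Qed.

Lemma mainU n : Upoly x s q n = \sum_(k < n.+1) T n k /\ Upoly x s q n.+1 = \sum_(k < n.+2) T n.+1 k.
Proof.
elim: n => [|n [A B]].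
  split.
    by rewrite big_ord1 /T /E /= qbinom0 big_geq // !expr0 !mulr1.
  rewrite big_ord_recr big_ord1 /T /E /= qbinom0 big_nat1 !expr0 expr1 addr0; ring.
split=> //.
have -> : Upoly x s q n.+2 = (1 + q ^+ n.+2) * x * Upoly x s q n.+1 + q ^+ n.+1 * s * Upoly x s q n by [].
rewrite big_ord_recl T0.
rewrite (eq_bigr (fun i : 'I_n.+2 => (1 + q ^+ n.+2) * x * T n.+1 i.+1 + q ^+ n.+1 * s * T n i)); last by move=> i _; rewrite lift0 TS.
rewrite B A big_split -!mulr_sumr (@sumT2 n n.+1 n.+2) //.
rewrite (@sumT2 n.+1 n.+2 n.+3) // big_ord_recl.
rewrite (eq_bigr (fun i : 'I_n.+2 => T n.+1 i.+1)); last by move=> i _; rewrite lift0.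
by rewrite /= mulrDr addrA.
Qed.
End Aux.

Theorem theorem2p3 (R : realFieldType) (x s q : R) (n : nat) :
  q != -1 ->
  Upoly x s q n =
  \sum_(k < n./2.+1)
     q ^+ (k * k) * qbinom q (n - k) k
     * (\prod_(k.+1 <= i < (n - k).+1) (1 + q ^+ i))
     * s ^+ k * x ^+ (n - 2 * k).
Proof.
move=> hq.
rewrite -(@sumT R q hq x s n n.+1 (ltnSn n) : _ = _).
exact: (@mainU R q hq x s n).1.
Qed.
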